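(* Every rule of the sequent calculus $\mathbf{G}$ for $\text{HXPath}_{\rm D}$ preserves validity: for every instance of every rule of $\mathbf{G}$ (including (Cut), (WL), (WR)), if all premisses of the instance are valid sequents, then its conclusion is a valid sequent.
   Context: Syntax of $\text{HXPath}_{\rm D}$: fix pairwise disjoint sets $\mathsf{Prop}$ (propositions, countably infinite), $\mathsf{Nom}$ (nominals, countably infinite), $\mathsf{Mod}$ (modalities, finite), $\mathsf{Cmp}$ (comparisons, finite). Path expressions $\alpha,\beta ::= \mathsf{a} \mid i{:} \mid \varphi? \mid \alpha\beta$ and node expressions $\varphi,\psi ::= p \mid i \mid \bot \mid \varphi\to\psi \mid @_i\varphi \mid \langle \mathsf{a}\rangle\varphi \mid \langle\alpha =_{\mathsf{c}} \beta\rangle \mid \langle \alpha\neq_{\mathsf{c}}\beta\rangle$, with $p\in\mathsf{Prop}$, $i\in\mathsf{Nom}$, $\mathsf{a}\in\mathsf{Mod}$, $\mathsf{c}\in\mathsf{Cmp}$. Abbreviations: $\top:=\bot\to\bot$, $\neg\varphi:=\varphi\to\bot$, $\varphi\lor\psi := \neg\varphi\to\psi$, $\varphi\land\psi:=\neg(\varphi\to\neg\psi)$, $\varphi\leftrightarrow\psi$ as usual; $\epsilon:=\top?$; $\langle j{:}\rangle\varphi := @_j\varphi$, $\langle\psi?\rangle\varphi:=\psi\land\varphi$, $\langle\alpha\beta\rangle\varphi:=\langle\alpha\rangle\langle\beta\rangle\varphi$, $[\alpha]\varphi:=\neg\langle\alpha\rangle\neg\varphi$. The symbol $\blacktriangle$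 stands for either $=_{\mathsf{c}}$ or $\neq_{\mathsf{c}}$ (for some $\mathsf{c}$). Models: $\mathcal{M}=\langle N,\{R_{\mathsf a}\}_{\mathsf a\in\mathsf{Mod}},\{\approx_{\mathsf c}\}_{\mathsf c\in\mathsf{Cmp}},g,V\rangle$ with $N\neq\emptyset$, each $R_{\mathsf a}\subseteq N\times N$, each $\approx_{\mathsf c}$ an equivalence relation on $N$, $g:\mathsf{Nom}\to N$, $V:\mathsf{Prop}\to 2^N$. Semantics: $\mathcal M,n,n'\Vdash \mathsf a$ iff $nR_{\mathsf a}n'$; $\mathcal M,n,n'\Vdash i{:}$ iff $g(i)=n'$; $\mathcal M,n,n'\Vdash\varphi?$ iff $n=n'$ and $\mathcal M,n\Vdash\varphi$; $\mathcal M,n,n'\Vdash\alpha\beta$ iff there is $n''$ with $\mathcal M,n,n''\Vdash\alpha$ and $\mathcal M,n'',n'\Vdash\beta$; $\mathcal M,n\Vdash p$ iff $n\in V(p)$; $\mathcal M,n\Vdash i$ iff $g(i)=n$; $\bot$ never holds; $\to$ classical; $\mathcal M,n\Vdash @_i\varphi$ iff $\mathcal M,g(i)\Vdash\varphi$; $\mathcal M,n\Vdash\langle\mathsf a\rangle\varphi$ iff some $n'$ has $nR_{\mathsf a}n'$ and $\mathcal M,n'\Vdash\varphi$; $\mathcal M,n\Vdash\langle\alpha=_{\mathsf c}\beta\rangle$ (resp. $\langle\alpha\neq_{\mathsf c}\beta\rangle$) iff there are $n',n''$ with $\mathcal M,n,n'\Vdash\alpha$, $\mathcal M,n,n''\Vdash\beta$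 and $n'\approx_{\mathsf c}n''$ (resp. $n'\not\approx_{\mathsf c}n''$). Sequents: a sequent $\Gamma\vdash\Delta$ consists of finite (possibly empty) sets $\Gamma,\Delta$ of node expressions each of the form $\langle i{:}\blacktriangle j{:}\rangle$ or $@_i\varphi$. It is valid iff for every model $\mathcal M$ and node $n$, if $\mathcal M,n\Vdash\gamma$ for all $\gamma\in\Gamma$ then $\mathcal M,n\Vdash\delta$ for some $\delta\in\Delta$. Notation ''$\varphi,\Gamma$'' means $\{\varphi\}\cup\Gamma$. The calculus $\mathbf{G}$ (each rule written premisses $\Rightarrow$ conclusion): (Ax) axiom $\varphi,\Gamma\vdash\Delta,\varphi$ where $\varphi$ is of the form $@_ip$, $@_ij$ or $\langle i{:}=_{\mathsf c}j{:}\rangle$; ($\bot$) axiom $@_i\bot,\Gamma\vdash\Delta$; ($\to$L) $\Gamma\vdash\Delta,@_i\varphi$ and $@_i\psi,\Gamma\vdash\Delta$ $\Rightarrow$ $@_i(\varphi\to\psi),\Gamma\vdash\Delta$; ($\to$R) $@_i\varphi,\Gamma\vdash\Delta,@_i\psi\Rightarrow\Gamma\vdash\Delta,@_i(\varphi\to\psi)$; ($@$T) $@_ii,\Gamma\vdash\Delta\Rightarrow\Gamma\vdash\Delta$; ($@5$) $@_jk,@_ij,@_ik,\Gamma\vdash\Delta\Rightarrow @_ij,@_ik,\Gamma\vdash\Delta$; (Nom) $@_ij,\Gamma\vdash\Delta\Rightarrow\Gamma\vdash\Delta$, $j$ not in the conclusion; (S$_1$) $@_j\varphi,@_ij,@_i\varphi,\Gamma\vdash\Delta\Rightarrow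 @_ij,@_i\varphi,\Gamma\vdash\Delta$, $\varphi$ of the form $p$, $\bot$ or $\langle\mathsf a\rangle k$; (S$_2$) $@_i\langle\mathsf a\rangle k,@_jk,@_i\langle\mathsf a\rangle j,\Gamma\vdash\Delta\Rightarrow @_jk,@_i\langle\mathsf a\rangle j,\Gamma\vdash\Delta$; (S$_3$) $\langle j{:}=_{\mathsf c}k{:}\rangle,@_ij,\langle i{:}=_{\mathsf c}k{:}\rangle,\Gamma\vdash\Delta\Rightarrow @_ij,\langle i{:}=_{\mathsf c}k{:}\rangle,\Gamma\vdash\Delta$; ($@$L) $@_i\varphi,\Gamma\vdash\Delta\Rightarrow @_j@_i\varphi,\Gamma\vdash\Delta$; ($@$R) $\Gamma\vdash\Delta,@_i\varphi\Rightarrow\Gamma\vdash\Delta,@_j@_i\varphi$; ($\langle\mathsf a\rangle$L) $@_i\langle\mathsf a\rangle j,@_j\varphi,\Gamma\vdash\Delta\Rightarrow @_i\langle\mathsf a\rangle\varphi,\Gamma\vdash\Delta$, $j$ not in the conclusion; ($\langle\mathsf a\rangle$R) $@_i\langle\mathsf a\rangle j,\Gamma\vdash\Delta,@_i\langle\mathsf a\rangle\varphi,@_j\varphi\Rightarrow @_i\langle\mathsf a\rangle j,\Gamma\vdash\Delta,@_i\langle\mathsf a\rangle\varphi$; ($\langle\blacktriangle\rangle$L) $@_i\langle\alpha\rangle j,@_i\langle\beta\rangle k,\langle j{:}\blacktriangle k{:}\rangle,\Gamma\vdash\Delta\Rightarrow @_i\langle\alpha\blacktriangle\beta\rangle,\Gamma\vdash\Delta$,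 $j,k$ distinct and not in the conclusion; ($\langle\blacktriangle\rangle$R) $@_i\langle\alpha\rangle j,@_i\langle\beta\rangle k,\Gamma\vdash\Delta,@_i\langle\alpha\blacktriangle\beta\rangle,\langle j{:}\blacktriangle k{:}\rangle\Rightarrow @_i\langle\alpha\rangle j,@_i\langle\beta\rangle k,\Gamma\vdash\Delta,@_i\langle\alpha\blacktriangle\beta\rangle$; (EqT) $\langle i{:}=_{\mathsf c}i{:}\rangle,\Gamma\vdash\Delta\Rightarrow\Gamma\vdash\Delta$; (Eq5) $\langle j{:}=_{\mathsf c}k{:}\rangle,\langle i{:}=_{\mathsf c}j{:}\rangle,\langle i{:}=_{\mathsf c}k{:}\rangle,\Gamma\vdash\Delta\Rightarrow\langle i{:}=_{\mathsf c}j{:}\rangle,\langle i{:}=_{\mathsf c}k{:}\rangle,\Gamma\vdash\Delta$; (NEqL) $\Gamma\vdash\Delta,\langle i{:}=_{\mathsf c}j{:}\rangle\Rightarrow\langle i{:}\neq_{\mathsf c}j{:}\rangle,\Gamma\vdash\Delta$; (NEqR) $\langle i{:}=_{\mathsf c}j{:}\rangle,\Gamma\vdash\Delta\Rightarrow\Gamma\vdash\Delta,\langle i{:}\neq_{\mathsf c}j{:}\rangle$; (Cut) $\Gamma\vdash\Delta,\varphi$ and $\varphi,\Gamma'\vdash\Delta'\Rightarrow\Gamma,\Gamma'\vdash\Delta,\Delta'$; (WL) $\Gamma\vdash\Delta\Rightarrow\varphi,\Gamma\vdash\Delta$; (WR) $\Gamma\vdash\Delta\Rightarrow\Gamma\vdash\Delta,\varphi$.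 Here $@_i\langle\alpha\rangle j$ for a path $\alpha$ is understood via the abbreviations above. *)

(* Defs.v *)
From Stdlib Require Import List.
From mathcomp Require Import ssreflect ssrbool eqtype fintype.
Import ListNotations.

Set Implicit Arguments.

(* Prop = nat (propositions), Nom = nat (nominals): both countably infinite.
   Mod and Cmp are finite types. *)

Inductive path (Mod Cmp : Type) : Type :=
| PMod  : Mod -> path Mod Cmp
| PNom  : nat -> path Mod Cmp
| PTest : node Mod Cmp -> path Mod Cmp
| PComp : path Mod Cmp -> path Mod Cmp -> path Mod Cmp
with node (Mod Cmp : Type) : Type :=
| NProp : nat -> node Mod Cmp
| NNom  : nat -> node Mod Cmp
| NBot  : node Mod Cmp
| NImp  : node Mod Cmp -> node Mod Cmp -> node Mod Cmp
| NAt   : nat -> node Mod Cmp -> node Mod Cmp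
| NDia  : Mod -> node Mod Cmp -> node Mod Cmp
| NEq   : Cmp -> path Mod Cmp -> path Mod Cmp -> node Mod Cmp
| NNeq  : Cmp -> path Mod Cmp -> path Mod Cmp -> node Mod Cmp.

Arguments PMod {Mod Cmp}. Arguments PNom {Mod Cmp}. Arguments PTest {Mod Cmp}.
Arguments PComp {Mod Cmp}. Arguments NProp {Mod Cmp}. Arguments NNom {Mod Cmp}.
Arguments NBot {Mod Cmp}. Arguments NImp {Mod Cmp}. Arguments NAt {Mod Cmp}.
Arguments NDia {Mod Cmp}. Arguments NEq {Mod Cmp}. Arguments NNeq {Mod Cmp}.

Definition NTop {Mod Cmp : Type} : node Mod Cmp := NImp NBot NBot.
Definition NNeg {Mod Cmp : Type} (f : node Mod Cmp) : node Mod Cmp := NImp f NBot.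
Definition NAnd {Mod Cmp : Type} (f g : node Mod Cmp) : node Mod Cmp :=
  NNeg (NImp f (NNeg g)).

Fixpoint dia {Mod Cmp : Type} (a : path Mod Cmp) (f : node Mod Cmp) : node Mod Cmp :=
  match a with
  | PMod m => NDia m f
  | PNom j => NAt j f
  | PTest g => NAnd g f
  | PComp a1 a2 => dia a1 (dia a2 f)
  end.

Definition ntri {Mod Cmp : Type} (b : bool) (c : Cmp) (a1 a2 : path Mod Cmp)
  : node Mod Cmp := if b then NEq c a1 a2 else NNeq c a1 a2.

Definition Eqn {Mod Cmp : Type} (c : Cmp) (i j : nat) : node Mod Cmp :=
  NEq c (PNom i) (PNom j).
Definition NEqn {Mod Cmp : Type} (c : Cmp) (i j : nat) : node Mod Cmp :=
  NNeq c (PNom i) (PNom j).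

Record model (Mod Cmp : Type) := Model {
  M_N : Type;
  M_inh : inhabited M_N;
  M_R : Mod -> M_N -> M_N -> Prop;
  M_E : Cmp -> M_N -> M_N -> Prop;
  M_E_refl : forall c x, M_E c x x;
  M_E_sym : forall c x y, M_E c x y -> M_E c y x;
  M_E_trans : forall c x y z, M_E c x y -> M_E c y z -> M_E c x z;
  M_g : nat -> M_N;
  M_V : nat -> M_N -> Prop
}.

Fixpoint psat {Mod Cmp : Type} (M : model Mod Cmp) (a : path Mod Cmp)
  (n n' : M_N M) {struct a} : Prop :=
  match a with
  | PMod m => M_R M m n n'
  | PNom i => M_g M i = n'
  | PTest f => n = n' /\ nsat M f n
  | PComp a1 a2 => exists n'', psat M a1 n n'' /\ psat M a2 n'' n'
  end
with nsat {Mod Cmp : Type} (M : model Mod Cmp) (f : node Mod Cmp)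
  (n : M_N M) {struct f} : Prop :=
  match f with
  | NProp p => M_V M p n
  | NNom i => M_g M i = n
  | NBot => False
  | NImp f1 f2 => nsat M f1 n -> nsat M f2 n
  | NAt i f1 => nsat M f1 (M_g M i)
  | NDia m f1 => exists n', M_R M m n n' /\ nsat M f1 n'
  | NEq c a1 a2 => exists n' n'', psat M a1 n n' /\ psat M a2 n n'' /\ M_E M c n' n''
  | NNeq c a1 a2 => exists n' n'', psat M a1 n n' /\ psat M a2 n n'' /\ ~ M_E M c n' n''
  end.

Fixpoint nom_in_path {Mod Cmp : Type} (j : nat) (a : path Mod Cmp) : Prop :=
  match a with
  | PMod _ => False
  | PNom i => i = j
  | PTest f => nom_in_node j f
  | PComp a1 a2 => nom_in_path j a1 \/ nom_in_path j a2
  end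
with nom_in_node {Mod Cmp : Type} (j : nat) (f : node Mod Cmp) : Prop :=
  match f with
  | NProp _ => False
  | NNom i => i = j
  | NBot => False
  | NImp f1 f2 => nom_in_node j f1 \/ nom_in_node j f2
  | NAt i f1 => i = j \/ nom_in_node j f1
  | NDia _ f1 => nom_in_node j f1
  | NEq _ a1 a2 => nom_in_path j a1 \/ nom_in_path j a2
  | NNeq _ a1 a2 => nom_in_path j a1 \/ nom_in_path j a2
  end.

(* Sequents: finite sets represented as lists (only membership matters);
   "phi, Gamma" is rendered as phi :: Gamma. *)
Definition sequent (Mod Cmp : Type) : Type := (list (node Mod Cmp) * list (node Mod Cmp))%type.

Definition seq_form {Mod Cmp : Type} (f : node Mod Cmp) : Prop :=
  (exists i g, f = NAt i g) \/
  (exists b c i j, f = ntri b c (PNom i) (PNom j)).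

Definition wf_sequent {Mod Cmp : Type} (s : sequent Mod Cmp) : Prop :=
  (forall f, In f (fst s) -> seq_form f) /\ (forall f, In f (snd s) -> seq_form f).

Definition valid {Mod Cmp : Type} (s : sequent Mod Cmp) : Prop :=
  forall (M : model Mod Cmp) (n : M_N M),
    (forall g, In g (fst s) -> nsat M g n) ->
    exists d, In d (snd s) /\ nsat M d n.

Definition nom_in_sequent {Mod Cmp : Type} (j : nat) (s : sequent Mod Cmp) : Prop :=
  exists f, (In f (fst s) \/ In f (snd s)) /\ nom_in_node j f.

Definition ax_form {Mod Cmp : Type} (f : node Mod Cmp) : Prop :=
  (exists i p, f = NAt i (NProp p)) \/
  (exists i j, f = NAt i (NNom j)) \/
  (exists c i j, f = Eqn c i j).

Definition s1_form {Mod Cmp : Type} (f : node Mod Cmp) : Prop :=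
  (exists p, f = NProp p) \/ f = NBot \/ (exists a k, f = NDia a (NNom k)).

(* rule_inst ps s : s is the conclusion of an instance of a rule of G
   whose premisses are ps. *)
Inductive rule_inst {Mod Cmp : Type} : list (sequent Mod Cmp) -> sequent Mod Cmp -> Prop :=
| R_Ax : forall f G D, ax_form f -> rule_inst [] (f :: G, f :: D)
| R_Bot : forall i G D, rule_inst [] (NAt i NBot :: G, D)
| R_ImpL : forall i f g G D,
    rule_inst [(G, NAt i f :: D); (NAt i g :: G, D)] (NAt i (NImp f g) :: G, D)
| R_ImpR : forall i f g G D,
    rule_inst [(NAt i f :: G, NAt i g :: D)] (G, NAt i (NImp f g) :: D)
| R_AtT : forall i G D, rule_inst [(NAt i (NNom i) :: G, D)] (G, D)
| R_At5 : forall i j k G D,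
    rule_inst [(NAt j (NNom k) :: NAt i (NNom j) :: NAt i (NNom k) :: G, D)]
              (NAt i (NNom j) :: NAt i (NNom k) :: G, D)
| R_Nom : forall i j G D, ~ nom_in_sequent j (G, D) ->
    rule_inst [(NAt i (NNom j) :: G, D)] (G, D)
| R_S1 : forall i j f G D, s1_form f ->
    rule_inst [(NAt j f :: NAt i (NNom j) :: NAt i f :: G, D)]
              (NAt i (NNom j) :: NAt i f :: G, D)
| R_S2 : forall i j k a G D,
    rule_inst [(NAt i (NDia a (NNom k)) :: NAt j (NNom k) :: NAt i (NDia a (NNom j)) :: G, D)]
              (NAt j (NNom k) :: NAt i (NDia a (NNom j)) :: G, D)
| R_S3 : forall i j k c G D,
    rule_inst [(Eqn c j k :: NAt i (NNom j) :: Eqn c i k :: G, D)]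
              (NAt i (NNom j) :: Eqn c i k :: G, D)
| R_AtL : forall i j f G D, rule_inst [(NAt i f :: G, D)] (NAt j (NAt i f) :: G, D)
| R_AtR : forall i j f G D, rule_inst [(G, NAt i f :: D)] (G, NAt j (NAt i f) :: D)
| R_DiaL : forall i j a f G D,
    ~ nom_in_sequent j (NAt i (NDia a f) :: G, D) ->
    rule_inst [(NAt i (NDia a (NNom j)) :: NAt j f :: G, D)] (NAt i (NDia a f) :: G, D)
| R_DiaR : forall i j a f G D,
    rule_inst [(NAt i (NDia a (NNom j)) :: G, NAt i (NDia a f) :: NAt j f :: D)]
              (NAt i (NDia a (NNom j)) :: G, NAt i (NDia a f) :: D)
| R_TriL : forall (b : bool) c i j k (a1 a2 : path Mod Cmp) G D,
    j <> k ->
    ~ nom_in_sequent j (NAt i (ntri b c a1 a2) :: G, D) ->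
    ~ nom_in_sequent k (NAt i (ntri b c a1 a2) :: G, D) ->
    rule_inst [(NAt i (dia a1 (NNom j)) :: NAt i (dia a2 (NNom k))
                  :: ntri b c (PNom j) (PNom k) :: G, D)]
              (NAt i (ntri b c a1 a2) :: G, D)
| R_TriR : forall (b : bool) c i j k (a1 a2 : path Mod Cmp) G D,
    rule_inst [(NAt i (dia a1 (NNom j)) :: NAt i (dia a2 (NNom k)) :: G,
                NAt i (ntri b c a1 a2) :: ntri b c (PNom j) (PNom k) :: D)]
              (NAt i (dia a1 (NNom j)) :: NAt i (dia a2 (NNom k)) :: G,
               NAt i (ntri b c a1 a2) :: D)
| R_EqT : forall c i G D, rule_inst [(Eqn c i i :: G, D)] (G, D)
| R_Eq5 : forall c i j k G D,
    rule_inst [(Eqn c j k :: Eqn c i j :: Eqn c i k :: G, D)]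
              (Eqn c i j :: Eqn c i k :: G, D)
| R_NEqL : forall c i j G D, rule_inst [(G, Eqn c i j :: D)] (NEqn c i j :: G, D)
| R_NEqR : forall c i j G D, rule_inst [(Eqn c i j :: G, D)] (G, NEqn c i j :: D)
| R_Cut : forall f G D G' D',
    rule_inst [(G, f :: D); (f :: G', D')] (G ++ G', D ++ D')
| R_WL : forall f G D, rule_inst [(G, D)] (f :: G, D)
| R_WR : forall f G D, rule_inst [(G, D)] (G, f :: D).

(* Main.v *)
Require Import Defs.
From Stdlib Require Import List.
From mathcomp Require Import ssreflect ssrbool eqtype fintype.
From Stdlib Require Import Classical PeanoNat.

Scheme path_mind := Induction for path Sort Prop
with node_mind := Induction for node Sort Prop.
Combined Scheme pn_mind from path_mind, node_mind.

Section S.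
Variables Mod Cmp : Type.

Definition upd (M : model Mod Cmp) (j : nat) (v : M_N M) : model Mod Cmp :=
  @Model Mod Cmp (M_N M) (M_inh M) (M_R M) (M_E M) (M_E_refl M) (M_E_sym M)
    (M_E_trans M) (fun x => if Nat.eqb x j then v else M_g M x) (M_V M).

Lemma upd_ne M j v x : x <> j -> M_g (upd M j v) x = M_g M x.
Proof. move=> H /=. case E: (Nat.eqb x j) => //. apply Nat.eqb_eq in E. contradiction. Qed.

Lemma upd_eq M j v : M_g (upd M j v) j = v.
Proof. by rewrite /= Nat.eqb_refl. Qed.

Lemma neqb i j : i <> j -> Nat.eqb i j = false.
Proof. move=> H; case E: (Nat.eqb i j) => //. apply Nat.eqb_eq in E. contradiction. Qed.

Lemma fresh_all M j v :
  (forall a : path Mod Cmp, ~ nom_in_path j a -> forall x y,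
      psat (upd M j v) a x y <-> psat M a x y) /\
  (forall f : node Mod Cmp, ~ nom_in_node j f -> forall x,
      nsat (upd M j v) f x <-> nsat M f x).
Proof.
  apply pn_mind; simpl.
  - tauto.
  - move=> i Hn x y. rewrite neqb; [tauto|auto].
  - move=> f IH Hn x y. rewrite IH //.
  - move=> a1 IH1 a2 IH2 Hn x y.
    split; intros [w [H2 H3]]; exists w; rewrite -> IH1 in *; try tauto; rewrite -> IH2 in *; tauto.
  - tauto.
  - move=> i Hn x. rewrite neqb; [tauto|auto].
  - tauto.
  - move=> f1 IH1 f2 IH2 Hn x. rewrite IH1; [|tauto]. rewrite IH2; tauto.
  - move=> i f IH Hn x. rewrite neqb; [|auto]. apply IH; tauto.
  - move=> m f IH Hn x.
    split; intros [w [H2 H3]]; exists w; rewrite -> IH in *; tauto.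
  - move=> c a1 IH1 a2 IH2 Hn x.
    split; intros [w [w' [H2 [H3 H4]]]]; exists w, w'; rewrite -> IH1 in *; try tauto; rewrite -> IH2 in *; tauto.
  - move=> c a1 IH1 a2 IH2 Hn x.
    split; intros [w [w' [H2 [H3 H4]]]]; exists w, w'; rewrite -> IH1 in *; try tauto; rewrite -> IH2 in *; tauto.
Qed.

Lemma fresh_node M j v (f : node Mod Cmp) x :
  ~ nom_in_node j f -> nsat (upd M j v) f x <-> nsat M f x.
Proof. move=> H; by apply (proj2 (fresh_all M j v)). Qed.

Lemma fresh_path M j v (a : path Mod Cmp) x y :
  ~ nom_in_path j a -> psat (upd M j v) a x y <-> psat M a x y.
Proof. move=> H; by apply (proj1 (fresh_all M j v)). Qed.

Lemma fresh_to M j v (f : node Mod Cmp) x :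
  ~ nom_in_node j f -> nsat M f x -> nsat (upd M j v) f x.
Proof. move=> H; by apply (fresh_node M j v f x H). Qed.
Lemma fresh_from M j v (f : node Mod Cmp) x :
  ~ nom_in_node j f -> nsat (upd M j v) f x -> nsat M f x.
Proof. move=> H; by apply (fresh_node M j v f x H). Qed.
Lemma fresh_pto M j v (f : path Mod Cmp) x y :
  ~ nom_in_path j f -> psat M f x y -> psat (upd M j v) f x y.
Proof. move=> H; by apply (fresh_path M j v f x y H). Qed.

Lemma dia_fwd M (a : path Mod Cmp) : forall f x y,
  psat M a x y -> nsat M f y -> nsat M (dia a f) x.
Proof.
  elim: a => [m|i|g|a1 IH1 a2 IH2] f x y /=.
  - move=> H1 H2; exists y; tauto.
  - by move=> -> .
  - move=> [-> Hg] Hf H; exact: (H Hg Hf).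
  - move=> [w [H1 H2]] Hf. apply: IH1 H1 _. apply: IH2 H2 Hf.
Qed.

Lemma dia_bwd M (a : path Mod Cmp) : forall f x,
  nsat M (dia a f) x -> exists y, psat M a x y /\ nsat M f y.
Proof.
  elim: a => [m|i|g|a1 IH1 a2 IH2] f x /=.
  - done.
  - move=> H; exists (M_g M i); tauto.
  - move=> H. exists x. apply NNPP => H'. apply: H => Hg Hf. apply: H'; tauto.
  - move=> H. case: (IH1 _ _ H) => w [H1 H2]. case: (IH2 _ _ H2) => y [H3 H4].
    exists y; split => //. by exists w.
Qed.

Lemma ntri_sem M b c (a1 a2 : path Mod Cmp) x : nsat M (ntri b c a1 a2) x <->
  exists y z, psat M a1 x y /\ psat M a2 x z /\ (if b then M_E M c y z else ~ M_E M c y z).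
Proof. by case: b. Qed.

Lemma ntri_nom j b c (a1 a2 : path Mod Cmp) :
  nom_in_node j (ntri b c a1 a2) <-> nom_in_path j a1 \/ nom_in_path j a2.
Proof. by case: b. Qed.

Lemma nis_head j (f : node Mod Cmp) G D : ~ nom_in_sequent j (f :: G, D) -> ~ nom_in_node j f.
Proof. move=> H Hn; apply: H; exists f; split => //; left; by left. Qed.
Lemma nis_G j (f : node Mod Cmp) G D : ~ nom_in_sequent j (f :: G, D) ->
  forall g, In g G -> ~ nom_in_node j g.
Proof. move=> H g Hg Hn; apply: H; exists g; split => //; left; by right. Qed.
Lemma nis_D j (G D : list (node Mod Cmp)) : ~ nom_in_sequent j (G, D) ->
  forall g, In g D -> ~ nom_in_node j g.
Proof. move=> H g Hg Hn; apply: H; exists g; split => //; by right. Qed.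

End S.
Arguments upd {Mod Cmp}.
Arguments fresh_to {Mod Cmp M j v f x}.
Arguments fresh_from {Mod Cmp M j v f x}.
Arguments fresh_pto {Mod Cmp M j v f x y}.
Arguments nis_head {Mod Cmp j f G D}.
Arguments nis_G {Mod Cmp j f G D}.
Arguments nis_D {Mod Cmp j G D}.

Theorem lemma1 (Mod Cmp : finType) (ps : list (sequent Mod Cmp)) (s : sequent Mod Cmp) :
  rule_inst ps s ->
  (forall p, In p ps -> wf_sequent p) -> wf_sequent s ->
  (forall p, In p ps -> valid p) ->
  valid s.
Proof.
  case=> [f G D Hax|i G D|i f g G D|i f g G D|i G D|i j k G D|i j G D Hfr|i j f G D Hs1
         |i j k a G D|i j k c G D|i j f G D|i j f G D|i j a f G D Hfr|i j a f G D
         |b c i j k a1 a2 G D Hjk Hfj Hfk|b c i j k a1 a2 G D|c i G D|c i j k G D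
         |c i j G D|c i j G D|f G D G' D'|f G D|f G D] _ _ Hv M n HG.
  all: unfold valid, Eqn, NEqn in *; cbn [fst snd] in *.
  (* Ax *)
  - exists f; split; [by left| apply HG; by left].
  (* Bot *)
  - by case: (HG _ (or_introl Logic.eq_refl)).
  (* ImpL *)
  - have Himp := HG _ (or_introl Logic.eq_refl). simpl in Himp.
    have HT : forall g0, In g0 G -> nsat M g0 n by move=> g0 H0; apply HG; right.
    case: (classic (nsat M f (M_g M i))) => Hf.
    + case: (Hv _ (or_intror (or_introl Logic.eq_refl)) M n) => [g0 [<-|H0]|d Hd].
      * exact: Himp.
      * exact: HT.
      * by exists d.
    + case: (Hv _ (or_introl Logic.eq_refl) M n HT) => d [[<-|Hd] Hs] //. by exists d.
  (* ImpR *)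
  - case: (classic (exists d, In d D /\ nsat M d n)) => [[d [Hd Hs]]|Hno].
    + exists d; split => //; by right.
    + exists (NAt i (NImp f g)); split; first by left. simpl => Hf.
      case: (Hv _ (or_introl Logic.eq_refl) M n) => [g0 [<-|H0]|d [[<-|Hd] Hs]].
      * exact: Hf.
      * by apply HG.
      * exact: Hs.
      * exfalso; apply: Hno; by exists d.
  (* AtT *)
  - apply: (Hv _ (or_introl Logic.eq_refl) M n) => g0 [<-|H0] //; by apply HG.
  (* At5 *)
  - apply: (Hv _ (or_introl Logic.eq_refl) M n) => g0 [<-|H0]; last by apply HG.
    have H1 := HG _ (or_introl Logic.eq_refl). have H2 := HG _ (or_intror (or_introl Logic.eq_refl)).
    simpl in H1, H2 |- *. by rewrite H2 -H1.
  (* Nom *)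
  - set M' := upd M j (M_g M i).
    have Hg : forall x, ~ nom_in_node j x -> nsat M' x n <-> nsat M x n.
      by move=> x Hx; apply: fresh_node.
    case: (Hv _ (or_introl Logic.eq_refl) M' n) => [g0 [<-|H0]|d [Hd Hs]].
    + simpl. rewrite Nat.eqb_refl. by case: (Nat.eqb i j).
    + apply/Hg; last by apply HG.
      move=> Hn; apply: Hfr; exists g0; split => //; by left.
    + exists d; split => //. apply/Hg => // Hn; apply: Hfr; exists d; split => //; by right.
  (* S1 *)
  - apply: (Hv _ (or_introl Logic.eq_refl) M n) => g0 [<-|H0]; last by apply HG.
    have H1 := HG _ (or_introl Logic.eq_refl). have H2 := HG _ (or_intror (or_introl Logic.eq_refl)).
    simpl in H1, H2 |- *. by rewrite H1.
  (* S2 *)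
  - apply: (Hv _ (or_introl Logic.eq_refl) M n) => g0 [<-|H0]; last by apply HG.
    have H1 := HG _ (or_introl Logic.eq_refl). have H2 := HG _ (or_intror (or_introl Logic.eq_refl)).
    simpl in H1, H2 |- *. case: H2 => w [Hw Hjw]. exists w; split => //; by rewrite H1 Hjw.
  (* S3 *)
  - apply: (Hv _ (or_introl Logic.eq_refl) M n) => g0 [<-|H0]; last by apply HG.
    have H1 := HG _ (or_introl Logic.eq_refl). have H2 := HG _ (or_intror (or_introl Logic.eq_refl)).
    simpl in H1, H2 |- *. case: H2 => x [y [<- [<- He]]]. exists (M_g M j), (M_g M k).
    by rewrite H1.
  (* AtL *)
  - apply: (Hv _ (or_introl Logic.eq_refl) M n) => g0 [<-|H0]; last by apply HG; right.
    exact: (HG _ (or_introl Logic.eq_refl)).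
  (* AtR *)
  - case: (Hv _ (or_introl Logic.eq_refl) M n) => [g0 H0|d [[<-|Hd] Hs]]; first by apply HG.
    + exists (NAt j (NAt i f)); split => //; by left.
    + exists d; split => //; by right.
  (* DiaL *)
  - have H1 := HG _ (or_introl Logic.eq_refl). simpl in H1. case: H1 => w [Hr Hf].
    have Hij : i <> j by move=> E; apply: Hfr; exists (NAt i (NDia a f)); split; [left; left|left].
    case: (Hv _ (or_introl Logic.eq_refl) (upd M j w) n) => [g0 [<-|[<-|H0]]|d [Hd Hs]].
    + exists w; simpl; rewrite Nat.eqb_refl neqb //.
    + change (nsat (upd M j w) f (M_g (upd M j w) j)); rewrite upd_eq.
      apply: fresh_to => // Hn; apply: Hfr.
      exists (NAt i (NDia a f)); split; [by left; left|right => //].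
    + apply: fresh_to; last by apply HG; right.
      move=> Hn; apply: Hfr; exists g0; split => //; left; by right.
    + exists d; split => //. apply: fresh_from Hs => Hn; apply: Hfr; exists d; split => //; by right.
  (* DiaR *)
  - case: (Hv _ (or_introl Logic.eq_refl) M n) => [g0 H0|d [[<-|[<-|Hd]] Hs]]; first by apply HG.
    + exists (NAt i (NDia a f)); split => //; by left.
    + exists (NAt i (NDia a f)); split; first by left.
      have H1 := HG _ (or_introl Logic.eq_refl). simpl in H1 |- *. case: H1 => w [Hr Hw].
      exists w; split => //; by rewrite -Hw.
    + exists d; split => //; by right.
  (* TriL *)
  - have H1 := HG _ (or_introl Logic.eq_refl).
    change (nsat M (ntri b c a1 a2) (M_g M i)) in H1.
    case/ntri_sem: H1 => y [z [Hy [Hz Hr]]].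
    have Hj := nis_head Hfj. have Hk := nis_head Hfk.
    simpl in Hj, Hk. rewrite ntri_nom in Hj. rewrite ntri_nom in Hk.
    have Hkj : k <> j by move=> E; apply: Hjk.
    have Hij : i <> j by move=> E; apply: Hj; left.
    have Hik : i <> k by move=> E; apply: Hk; left.
    have Ha1j : ~ nom_in_path j a1 by move=> E; apply: Hj; right; left.
    have Ha2j : ~ nom_in_path j a2 by move=> E; apply: Hj; right; right.
    have Ha1k : ~ nom_in_path k a1 by move=> E; apply: Hk; right; left.
    have Ha2k : ~ nom_in_path k a2 by move=> E; apply: Hk; right; right.
    have Egj : M_g (upd (upd M j y) k z) j = y by rewrite upd_ne // upd_eq.
    have Egk : M_g (upd (upd M j y) k z) k = z by rewrite upd_eq.
    have Egi : M_g (upd (upd M j y) k z) i = M_g M i by rewrite upd_ne // upd_ne.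
    case: (Hv _ (or_introl Logic.eq_refl) (upd (upd M j y) k z) n)
      => [g0 [<-|[<-|[<-|H0]]]|d [Hd Hs]].
    + change (nsat (upd (upd M j y) k z) (dia a1 (NNom j)) (M_g (upd (upd M j y) k z) i)).
      rewrite Egi. apply: dia_fwd.
      * apply: fresh_pto => //. apply: fresh_pto => //. exact: Hy.
      * exact: Egj.
    + change (nsat (upd (upd M j y) k z) (dia a2 (NNom k)) (M_g (upd (upd M j y) k z) i)).
      rewrite Egi. apply: dia_fwd.
      * apply: fresh_pto => //. apply: fresh_pto => //. exact: Hz.
      * exact: Egk.
    + apply/ntri_sem. exists y, z. split => //.
    + have H0' : In g0 G := H0. eapply (fresh_to (nis_G Hfk _ H0')).
      eapply (fresh_to (nis_G Hfj _ H0')).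
      apply: HG; by right.
    + exists d; split => //.
      apply: (fresh_from (nis_D Hfj _ Hd)). apply: (fresh_from (nis_D Hfk _ Hd)). exact: Hs.
  (* TriR *)
  - have H1 := HG _ (or_introl Logic.eq_refl).
    have H2 := HG _ (or_intror (or_introl Logic.eq_refl)).
    change (nsat M (dia a1 (NNom j)) (M_g M i)) in H1.
    change (nsat M (dia a2 (NNom k)) (M_g M i)) in H2.
    case/dia_bwd: H1 => y [Hy Ey]. case/dia_bwd: H2 => z [Hz Ez].
    simpl in Ey, Ez.
    case: (Hv _ (or_introl Logic.eq_refl) M n) => [g0 H0|d [[<-|[<-|Hd]] Hs]].
    + by apply HG.
    + exists (NAt i (ntri b c a1 a2)); split => //; by left.
    + exists (NAt i (ntri b c a1 a2)); split; first by left.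
      case/ntri_sem: Hs => y' [z' [Hy' [Hz' Hr]]]. simpl in Hy', Hz'.
      apply/ntri_sem. exists y, z. split => //; split => //.
      by rewrite -Ey -Ez Hy' Hz'.
    + exists d; split => //; by right.
  (* EqT *)
  - apply: (Hv _ (or_introl Logic.eq_refl) M n) => g0 [<-|H0]; last by apply HG.
    exists (M_g M i), (M_g M i); split => //; split => //; apply: M_E_refl.
  (* Eq5 *)
  - apply: (Hv _ (or_introl Logic.eq_refl) M n) => g0 [<-|H0]; last by apply HG.
    have H1 := HG _ (or_introl Logic.eq_refl). have H2 := HG _ (or_intror (or_introl Logic.eq_refl)).
    simpl in H1, H2 |- *. case: H1 => x [y [<- [<- He1]]]. case: H2 => x' [y' [<- [<- He2]]].
    exists (M_g M j), (M_g M k); split => //; split => //.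
    eapply M_E_trans; [eapply M_E_sym; exact He1| exact He2].
  (* NEqL *)
  - have H1 := HG _ (or_introl Logic.eq_refl). simpl in H1. case: H1 => x [y [<- [<- He1]]].
    case: (Hv _ (or_introl Logic.eq_refl) M n) => [g0 H0|d [[<-|Hd] Hs]]; first by apply HG; right.
    + exfalso. simpl in Hs. case: Hs => x2 [y2 [<- [<- He]]]. exact: He1.
    + by exists d.
  (* NEqR *)
  - case: (classic (M_E M c (M_g M i) (M_g M j))) => He.
    + case: (Hv _ (or_introl Logic.eq_refl) M n) => [g0 [<-|H0]|d [Hd Hs]].
      * by exists (M_g M i), (M_g M j).
      * by apply HG.
      * exists d; split => //; by right.
    + exists (NNeq c (PNom i) (PNom j)); split; first by left.
      by exists (M_g M i), (M_g M j).
  (* Cut *)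
  - case: (Hv _ (or_introl Logic.eq_refl) M n) => [g0 H0|d [[<-|Hd] Hs]].
    + apply HG; apply in_or_app; by left.
    + case: (Hv _ (or_intror (or_introl Logic.eq_refl)) M n) => [g0 [<-|H0]|d' [Hd' Hs']] //.
      * apply HG; apply in_or_app; by right.
      * exists d'; split => //; apply in_or_app; by right.
    + exists d; split => //; apply in_or_app; by left.
  (* WL *)
  - apply: (Hv _ (or_introl Logic.eq_refl) M n) => g0 H0; apply HG; by right.
  (* WR *)
  - case: (Hv _ (or_introl Logic.eq_refl) M n) => [g0 H0|d [Hd Hs]]; first by apply HG.
    exists d; split => //; by right.
Qed.
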